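(* For every constant specification $\mathsf{CS}$ for $\mathsf{LPC}^+$ there exist formulas $\phi,\psi$ and a term $t$ such that $\models_{\mathsf{LPC}^+_{\mathsf{CS}}}\phi\equiv\psi$ but $\not\models_{\mathsf{LPC}^+_{\mathsf{CS}}} t{:}\phi\equiv t{:}\psi$. (Indeed one may take $\phi=p$, $\psi=p\wedge p$ and $t=x$ a justification variable.)
   Context: Language: countable sets $\mathsf{Const}$, $\mathsf{Var}$, $\mathsf{Prop}$; terms $t ::= c \mid x \mid t\cdot t \mid t+t \mid\ !t$; formulas $\phi ::= p \mid \neg\phi \mid \phi\wedge\phi \mid \phi\supset\phi \mid \phi>\phi \mid t{:}\phi$; $\mathsf{Tm},\mathsf{Fm}$ the sets of terms and formulas; $\phi\equiv\psi:=(\phi\supset\psi)\wedge(\psi\supset\phi)$. A constant specification $\mathsf{CS}$ is a set of formulas $c{:}\phi$ with $c\in\mathsf{Const}$ and $\phi$ an instance of the axiom schemes (A1) classical tautologies, (A2) $(\phi>(\psi\supset\chi))\supset((\phi>\psi)\supset(\phi>\chi))$, (A3) $\phi>\phi$, (A4) $(\phi>\psi)\supset(\phi\supset\psi)$, (A5) $(s{:}(\phi>\psi)\wedge t{:}\phi) > (s\cdot t){:}\psi$, (A6) $s{:}\phi > (s+t){:}\phi$, (A7) $t{:}\phi>(s+t){:}\phi$, (A8) $t{:}\phi>\phi$, (A9) $t{:}\phi > (!t){:}t{:}\phi$. A relational model is $\mathcal M=(W,W_N,R_{Fm},R_{Tm},V)$: $W$ a nonempty set, $W_N\subseteq W$ nonempty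 (normal states); $R_{Fm}$ assigns to each $\phi\in\mathsf{Fm}$ a relation $R_\phi\subseteq W_N\times W_N$; $R_{Tm}$ assigns to each $t\in\mathsf{Tm}$ a relation $R_t\subseteq W\times W$; $V$ assigns to each normal state $w$ a set $V(w)\subseteq\mathsf{Prop}$ and to each $w\in W\setminus W_N$ a set $V(w)\subseteq\mathsf{Fm}$. $R_\phi(w)$, $R_t(w)$ denote the sets of successors. Truth: at $w\in W\setminus W_N$, $\mathcal M,w\models\phi$ iff $\phi\in V(w)$; at $w\in W_N$: $p$ iff $p\in V(w)$; $\neg,\wedge,\supset$ classically; $\phi>\psi$ iff $R_\phi(w)\subseteq[\psi]$; $t{:}\phi$ iff $R_t(w)\subseteq[\phi]$, where $[\phi]=\{w\in W:\mathcal M,w\models\phi\}$. $\mathcal M$ is an $\mathsf{LPC}^+_{\mathsf{CS}}$-model if for all $w\in W_N$: (1) $R_\phi(w)\subseteq[\phi]$ for all $\phi$; (2) if $w\in[\phi]$ then $w\in R_\phi(w)$; (3) $R_c(w)\subseteq[\phi]$ for each $c{:}\phi\in\mathsf{CS}$; (4) $R_{s+t}(w)\subseteq R_s(w)\cap R_t(w)$; (5) for all $v\in R_{s\cdot t}(w)$ and all $\phi,\psi$: if $w\in[s{:}(\phi>\psi)\wedge t{:}\phi]$ then $v\in[\psi]$; (6) $wR_tw$ for all $t$; (7) for all $t$ and $v,u\in W$, if $wR_{!t}v$ and $vR_tu$ then $wR_tu$. $\models_{\mathsf{LPC}^+_{\mathsf{CS}}}\phi$ means $\phi$ is true at every normal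 state of every $\mathsf{LPC}^+_{\mathsf{CS}}$-model. *)

(* Defs.v *)
From Stdlib Require Import List.

Definition Const := nat.
Definition Var := nat.
Definition PVar := nat.

Inductive Tm : Type :=
| TConst : Const -> Tm
| TVar : Var -> Tm
| TApp : Tm -> Tm -> Tm
| TSum : Tm -> Tm -> Tm
| TBang : Tm -> Tm.

Inductive Fm : Type :=
| FAtom : PVar -> Fm
| FNeg : Fm -> Fm
| FAnd : Fm -> Fm -> Fm
| FImp : Fm -> Fm -> Fm
| FCond : Fm -> Fm -> Fm
| FJust : Tm -> Fm -> Fm.

Definition FEquiv (phi psi : Fm) : Fm := FAnd (FImp phi psi) (FImp psi phi).

(* Classical tautologies: formulas true under every Boolean valuation that
   treats atoms, conditionals and justification formulas as propositional
   atoms. *)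
Fixpoint bool_eval (v : Fm -> bool) (f : Fm) : bool :=
  match f with
  | FNeg a => negb (bool_eval v a)
  | FAnd a b => andb (bool_eval v a) (bool_eval v b)
  | FImp a b => orb (negb (bool_eval v a)) (bool_eval v b)
  | _ => v f
  end.

Definition Tautology (f : Fm) : Prop := forall v, bool_eval v f = true.

Inductive AxiomInst : Fm -> Prop :=
| A1 : forall f, Tautology f -> AxiomInst f
| A2 : forall a b c,
    AxiomInst (FImp (FCond a (FImp b c)) (FImp (FCond a b) (FCond a c)))
| A3 : forall a, AxiomInst (FCond a a)
| A4 : forall a b, AxiomInst (FImp (FCond a b) (FImp a b))
| A5 : forall s t a b,
    AxiomInst (FCond (FAnd (FJust s (FCond a b)) (FJust t a)) (FJust (TApp s t) b))
| A6 : forall s t a, AxiomInst (FCond (FJust s a) (FJust (TSum s t) a))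
| A7 : forall s t a, AxiomInst (FCond (FJust t a) (FJust (TSum s t) a))
| A8 : forall t a, AxiomInst (FCond (FJust t a) a)
| A9 : forall t a, AxiomInst (FCond (FJust t a) (FJust (TBang t) (FJust t a))).

Definition ConstSpec := Const -> Fm -> Prop.
Definition is_CS (CS : ConstSpec) : Prop :=
  forall c phi, CS c phi -> AxiomInst phi.

Record Model : Type := {
  W : Type;
  WN : W -> Prop;                       (* normal states *)
  WN_nonempty : exists w, WN w;
  RF : Fm -> W -> W -> Prop;            (* R_phi, only relevant on W_N x W_N *)
  RF_normal : forall phi w v, WN w -> RF phi w v -> WN w /\ WN v;
  RT : Tm -> W -> W -> Prop;
  VP : W -> PVar -> Prop;
  VF : W -> Fm -> Prop
}.

Fixpoint sat (M : Model) (w : W M) (f : Fm) : Prop :=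
  (~ WN M w -> VF M w f) /\
  (WN M w ->
   match f with
   | FAtom p => VP M w p
   | FNeg a => ~ sat M w a
   | FAnd a b => sat M w a /\ sat M w b
   | FImp a b => sat M w a -> sat M w b
   | FCond a b => forall v, RF M a w v -> sat M v b
   | FJust t a => forall v, RT M t w v -> sat M v a
   end).

Definition is_LPCplus_model (CS : ConstSpec) (M : Model) : Prop :=
  forall w, WN M w ->
  (forall phi v, RF M phi w v -> sat M v phi) /\
  (forall phi, sat M w phi -> RF M phi w w) /\
  (forall c phi, CS c phi -> forall v, RT M (TConst c) w v -> sat M v phi) /\
  (forall s t v, RT M (TSum s t) w v -> RT M s w v /\ RT M t w v) /\
  (forall s t v, RT M (TApp s t) w v -> forall phi psi,
      sat M w (FAnd (FJust s (FCond phi psi)) (FJust t phi)) -> sat M v psi) /\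
  (forall t, RT M t w w) /\
  (forall t v u, RT M (TBang t) w v -> RT M t v u -> RT M t w u).

Definition valid (CS : ConstSpec) (f : Fm) : Prop :=
  forall M : Model, is_LPCplus_model CS M -> forall w, WN M w -> sat M w f.

(* Main.v *)
Require Import Defs.
From Stdlib Require Import Classical ClassicalEpsilon.

Definition isvar (t : Tm) : Prop := match t with TVar _ => True | _ => False end.

Fixpoint ev (f : Fm) : Prop :=
  match f with
  | FAtom _ => True
  | FNeg a => ~ ev a
  | FAnd a b => ev a /\ ev b
  | FImp a b => ev a -> ev b
  | FCond a b => ev a -> ev b
  | FJust t a => ev a /\ (isvar t -> a = FAtom 0)
  end.

Definition cRF (f : Fm) (w v : bool) : Prop := w = v /\ v = true /\ ev f.
Definition cRT (t : Tm) (w v : bool) : Prop := w = v \/ isvar t.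

Lemma cne : exists w : bool, w = true. Proof. exists true; reflexivity. Qed.
Lemma cRFn : forall phi w v, w = true -> cRF phi w v -> w = true /\ v = true.
Proof. intros phi w v H [H1 [H2 _]]. auto. Qed.

Definition cM : Model :=
  {| W := bool; WN := fun w => w = true; WN_nonempty := cne; RF := cRF;
     RF_normal := cRFn; RT := cRT; VP := fun _ _ => True;
     VF := fun _ f => f = FAtom 0 |}.

Lemma sat_false : forall f, sat cM false f <-> f = FAtom 0.
Proof.
  intros f; destruct f; simpl; split;
    try (intros [H _]; apply H; discriminate);
    intros H; split; try (intros; discriminate); intros _; exact H.
Qed.

Lemma sat_true : forall f, sat cM true f <-> ev f.
Proof.
  induction f; simpl.
  - split; auto. intros _; split; auto. intro H; exfalso; apply H; reflexivity.
  - split. intros [_ H]. specialize (H eq_refl). tauto.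
    intros H; split. intro C; exfalso; apply C; reflexivity. intros _; tauto.
  - split. intros [_ H]. specialize (H eq_refl). tauto.
    intros H; split. intro C; exfalso; apply C; reflexivity. intros _; tauto.
  - split. intros [_ H]. specialize (H eq_refl). tauto.
    intros H; split. intro C; exfalso; apply C; reflexivity. intros _; tauto.
  - split.
    + intros [_ H] Ha. specialize (H eq_refl true). apply IHf2, H.
      unfold cRF; simpl; auto.
    + intros H; split. intro C; exfalso; apply C; reflexivity.
      intros _ v [<- [_ Ha]]. apply IHf2; auto.
  - split.
    + intros [_ H]. specialize (H eq_refl). split.
      * apply IHf, H. left; reflexivity.
      * intros Hv. apply sat_false, H. right; exact Hv.
    + intros [Ha Hv]; split. intro C; exfalso; apply C; reflexivity.
      intros _ v [<- | Hx]. apply IHf; auto.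
      destruct v. apply IHf; auto. apply sat_false; auto.
Qed.

Definition bv (f : Fm) : bool :=
  if excluded_middle_informative (ev f) then true else false.

Lemma bv_ok : forall f, bool_eval bv f = true <-> ev f.
Proof.
  assert (Hb : forall f, bv f = true <-> ev f).
  { intro f; unfold bv; destruct (excluded_middle_informative (ev f)); split; auto; discriminate. }
  induction f; simpl; try apply Hb.
  - rewrite <- IHf. destruct (bool_eval bv f); simpl; split; intuition discriminate.
  - rewrite <- IHf1, <- IHf2.
    destruct (bool_eval bv f1), (bool_eval bv f2); simpl; split; intuition discriminate.
  - rewrite <- IHf1, <- IHf2.
    destruct (bool_eval bv f1), (bool_eval bv f2); simpl; split; intuition discriminate.
Qed.

Lemma evJ : forall t a, ev (FJust t a) -> ev a.
Proof. intros t a [H _]; exact H. Qed.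

Lemma ax_ev : forall f, AxiomInst f -> ev f.
Proof.
  intros f H; destruct H; simpl.
  - apply bv_ok, H.
  - tauto.
  - tauto.
  - tauto.
  - intros [[H1 _] [H2 _]]. split. apply H1, H2. intros [].
  - intros H; split. exact (evJ _ _ H). intros [].
  - intros H; split. exact (evJ _ _ H). intros [].
  - intros H; exact (evJ _ _ H).
  - intros H; split. exact H. intros [].
Qed.

Lemma cM_model : forall CS, is_CS CS -> is_LPCplus_model CS cM.
Proof.
  intros CS HCS w Hw. simpl in Hw. subst w.
  split; [|split; [|split; [|split; [|split; [|split]]]]].
  - intros phi v [<- [_ H]]. apply sat_true; auto.
  - intros phi H. unfold cRF; simpl. split; auto. split; auto. apply sat_true; auto.
  - intros c phi Hc v [<- | []]. apply sat_true, ax_ev, (HCS c), Hc.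
  - intros s t v [<- | []]. split; left; reflexivity.
  - intros s t v [<- | []] phi psi H.
    apply sat_true in H. simpl in H. destruct H as [[H1 _] [H2 _]].
    apply sat_true; auto.
  - intros t; left; reflexivity.
  - intros t v u [<- | []] H. exact H.
Qed.

Theorem mainTheorem4 :
  forall CS : ConstSpec, is_CS CS ->
  exists (phi psi : Fm) (t : Tm),
    valid CS (FEquiv phi psi) /\ ~ valid CS (FEquiv (FJust t phi) (FJust t psi)).
Proof.
  intros CS HCS.
  exists (FAtom 0), (FAnd (FAtom 0) (FAtom 0)), (TVar 0). split.
  - intros M HM w Hw. simpl.
    split. intro C; contradiction.
    intros _. split.
    + split. intro C; contradiction. intros _ H. split. intro C; contradiction.
      intros _; split; auto.
    + split. intro C; contradiction. intros _ [_ H]. apply H; auto.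
  - intros H. specialize (H cM (cM_model CS HCS) true eq_refl).
    apply sat_true in H. simpl in H. destruct H as [H _].
    assert (ev (FAtom 0) /\ (isvar (TVar 0) -> FAtom 0 = FAtom 0)) as X.
    { simpl; auto. }
    destruct (H X) as [_ Y]. specialize (Y I). discriminate.
Qed.
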